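(* Let $G=\langle a,b,c,d\mid [a,b]=[c,d]\rangle$ be the fundamental group of a closed surface of genus 2, with $[x,y]=xyx^{-1}y^{-1}$, and let $\tau$ be the automorphism of $G$ given by $\tau(a)=a^{-1}$, $\tau(b)=b^{-1}$, $\tau(c)=xc^{-1}x^{-1}$, $\tau(d)=xd^{-1}x^{-1}$ where $x=a^{-1}b^{-1}dc$ (induced by the hyperelliptic involution). Let $q$ be odd and let $f:G\to\mathrm{PSL}_2(\mathbb{F}_q)$ be an irreducible homomorphism. If $f$ lifts to a homomorphism $G\to\mathrm{SL}_2(\mathbb{F}_q)$, then there is $T\in\mathrm{PGL}_2(\mathbb{F}_q)$ such that $T f(\gamma)T^{-1}=f(\tau(\gamma))$ for all $\gamma\in G$.
   Context: A homomorphism into $\mathrm{PSL}_2(\mathbb{F}_q)$ is irreducible if its image has no common fixed point in its action on the projective line over the algebraic closure of $\mathbb{F}_q$ (equivalently, a lift to $\mathrm{SL}_2$ is not conjugate into upper triangular matrices over $\overline{\mathbb{F}}_q$). Here $\mathrm{PSL}_2(\mathbb{F}_q)$ is regarded as a subgroup of $\mathrm{PGL}_2(\mathbb{F}_q)$. *)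

(* Defs.v *)
From HB Require Import structures.
From mathcomp Require Import all_boot all_order all_algebra all_fingroup all_field.
Set Implicit Arguments. Unset Strict Implicit. Unset Printing Implicit Defensive.
Import GRing.Theory.
Local Open Scope ring_scope.

Inductive gen := ga | gb | gc | gd.

(* Words in the generators: a letter is (generator, inverted?). *)
Definition word := seq (gen * bool).

Definition winv (w : word) : word := rev (map (fun l => (l.1, ~~ l.2)) w).

Definition xw : word := [:: (ga, true); (gb, true); (gd, false); (gc, false)].

Definition tau_gen (g : gen) : word :=
  match g with
  | ga => [:: (ga, true)]
  | gb => [:: (gb, true)]
  | gc => xw ++ [:: (gc, true)] ++ winv xw
  | gd => xw ++ [:: (gd, true)] ++ winv xw
  end.

Definition tau_letter (l : gen * bool) : word :=
  if l.2 then winv (tau_gen l.1) else tau_gen l.1.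

Definition tau (w : word) : word := flatten (map tau_letter w).

Section Mx.
Variable F : fieldType.

Definition eval (M : gen -> 'M[F]_2) (w : word) : 'M[F]_2 :=
  foldr (fun l acc => (if l.2 then invmx (M l.1) else M l.1) *m acc) 1%:M w.

Definition mcomm (A B : 'M[F]_2) : 'M[F]_2 := A *m B *m invmx A *m invmx B.

(* equality in PGL_2(F): equal up to a nonzero scalar *)
Definition proj_eq (A B : 'M[F]_2) : Prop := exists c : F, c != 0 /\ A = c *: B.
End Mx.

(* Irreducibility of the homomorphism w |-> class of eval M w: the image has
   no common fixed point on P^1 over an algebraic closure, i.e. over any
   algebraically closed extension L of F there is no common eigenline. *)
Definition irreducible_hom (F : fieldType) (M : gen -> 'M[F]_2) : Prop :=
  forall (L : closedFieldType) (iota : {rmorphism F -> L}),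
    ~ exists v : 'cV[L]_2, v != 0 /\
        forall w : word, exists lam : L, map_mx iota (eval M w) *m v = lam *: v.

(* Main.v *)
Require Import Defs.
From HB Require Import structures.
From mathcomp Require Import all_boot all_order all_algebra all_fingroup all_field.
From mathcomp Require Import ring.
From Stdlib Require Import Classical.
Set Implicit Arguments. Unset Strict Implicit. Unset Printing Implicit Defensive.
Import GRing.Theory.
Local Open Scope ring_scope.

Section Gen.
Variable F : fieldType.
Implicit Types A B C D Y Z R P Q E T : 'M[F]_2.

Lemma w0 : (widen_ord (m:=2) (leqnSn 1) ord_max) = 0 :> 'I_2. Proof. exact: val_inj. Qed.
Lemma om1 : (ord_max : 'I_2) = 1. Proof. exact: val_inj. Qed.
Lemma l00 : lift (0 : 'I_2) 0 = 1 :> 'I_2. Proof. exact: val_inj. Qed.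
Lemma l10 : lift (1 : 'I_2) 0 = 0 :> 'I_2. Proof. exact: val_inj. Qed.
Lemma mul2E m n (A : 'M[F]_(m,2)) (B : 'M[F]_(2,n)) i j :
  (A *m B) i j = A i 0 * B 0 j + A i 1 * B 1 j.
Proof. by rewrite !mxE !big_ord_recr big_ord0 /= add0r w0 om1. Qed.
Lemma mul2E' A B i j : (A * B) i j = A i 0 * B 0 j + A i 1 * B 1 j.
Proof. exact: mul2E. Qed.
Lemma tr2E A : \tr A = A 0 0 + A 1 1.
Proof. by rewrite /mxtrace !big_ord_recr big_ord0 /= add0r w0 om1. Qed.
Lemma det2E A : \det A = A 0 0 * A 1 1 - A 0 1 * A 1 0.
Proof.
rewrite (expand_det_row _ 0) !big_ord_recr big_ord0 /= add0r /cofactor !det_mx11 !mxE /=.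
rewrite w0 om1 l00 l10 expr0 expr1. ring.
Qed.
Lemma ord2 (i : 'I_2) : i = 0 \/ i = 1.
Proof. case: i => [[|[|//]] H]; [left|right]; exact: val_inj. Qed.
Lemma one2E i j : (1 : 'M[F]_2) i j = (i == j)%:R.
Proof. by rewrite mxE. Qed.

Ltac mx2 := apply/matrixP; do 2 (let k := fresh "k" in move=> k; case: (ord2 k) => ->);
  rewrite ?(mul2E', mxE, tr2E, det2E, one2E) /=; ring.

Lemma YZY Y Z : Y * Z * Y = \tr (Y * Z) *: Y - \det Y *: ((\tr Z)%:M - Z).
Proof. mx2. Qed.
Lemma invt_gen Y R : Y * R = ((\tr R)%:M - R) * Y + \tr Y *: R + (\tr (Y * R) - \tr Y * \tr R)%:M.
Proof. mx2. Qed.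
Lemma CHinv R : R * ((\tr R)%:M - R) = (\det R)%:M.
Proof. mx2. Qed.
Lemma trB Y Z : \tr (Y - Z) = \tr Y - \tr Z.
Proof. rewrite !tr2E !mxE; ring. Qed.
Lemma trC Y Z : \tr (Y * Z) = \tr (Z * Y).
Proof. exact: mxtrace_mulC. Qed.

Lemma unit1 R : \det R = 1 -> R \is a GRing.unit.
Proof. by move=> h; rewrite unitmxE h unitr1. Qed.

Lemma inv_det1 R : \det R = 1 -> R^-1 = (\tr R)%:M - R.
Proof.
move=> h; have uR := unit1 h.
by rewrite -[RHS](mulKr uR) CHinv h mulr1.
Qed.

Lemma key Y R : \tr Y = 0 -> \det R = 1 -> \tr (Y * R) = 0 -> Y * R = R^-1 * Y.
Proof.
move=> hY hR hYR; rewrite invt_gen hY hYR inv_det1 // mul0r subrr scale0r addr0.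
by rewrite -scalemx1 scale0r addr0.
Qed.

Lemma comm_inv P Q R : \det R = 1 -> (P * R = R * P \/ Q * R = R * Q) ->
  (P * Q - Q * P) * R = R^-1 * (P * Q - Q * P).
Proof.
move=> dR hc; apply: key => //; first by rewrite trB trC subrr.
rewrite mulrBl trB; apply/eqP; rewrite subr_eq0; apply/eqP.
case: hc => h.
- by rewrite -[in RHS]mulrA [in RHS]h [in RHS]mulrA [in RHS]trC mulrA.
- by rewrite -[in LHS]mulrA [in LHS]h [in LHS]mulrA [in LHS]trC [in LHS]mulrA.
Qed.

Lemma side Q N : \det Q = 1 -> \tr (N * Q) = 0 -> Q * N * Q = - ((\tr N)%:M - N).
Proof. by move=> hQ hN; rewrite YZY trC hN scale0r sub0r hQ scale1r. Qed.

Lemma XS A B C D : \det A = 1 -> \det B = 1 -> \det C = 1 -> \det D = 1 ->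
  A * B * A^-1 * B^-1 = C * D * C^-1 * D^-1 ->
  A * B - B * A = (A^-1 * B^-1 * D * C) * (C * D - D * C).
Proof.
move=> dA dB dC dD hrel.
have uA := unit1 dA; have uB := unit1 dB; have uC := unit1 dC; have uD := unit1 dD.
set K := A * B * A^-1 * B^-1.
have eP : A * B = K * (B * A) by rewrite /K mulrA (mulrVK uB) (mulrVK uA).
have eR : C * D = K * (D * C) by rewrite /K hrel mulrA (mulrVK uD) (mulrVK uC).
have dQ : \det (B * A) = 1 by rewrite det_mulmx dA dB mulr1.
have dS : \det (D * C) = 1 by rewrite det_mulmx dC dD mulr1.
have tQ : \tr ((K - 1) * (B * A)) = 0 by rewrite mulrBl mul1r -eP trB trC subrr.
have tS : \tr ((K - 1) * (D * C)) = 0 by rewrite mulrBl mul1r -eR trB trC subrr.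
have e1 : (B * A) * (A * B - B * A) = - ((\tr (K - 1))%:M - (K - 1)).
  by rewrite -(side dQ tQ) eP -[in RHS]mulrA [in RHS]mulrBl mul1r.
have e2 : (D * C) * (C * D - D * C) = - ((\tr (K - 1))%:M - (K - 1)).
  by rewrite -(side dS tS) eR -[in RHS]mulrA [in RHS]mulrBl mul1r.
have uBA : B * A \is a GRing.unit by rewrite unitrMl.
by rewrite -[LHS](mulKr uBA) e1 -e2 invrM // !mulrA.
Qed.

End Gen.


Section Gen2.
Variable F : fieldType.
Implicit Types A B C D Y Z R P Q E T U : 'M[F]_2.

Definition invs Y R := Y * R = R^-1 * Y.

Lemma central P : (forall E, P * E = E * P) -> \det P = 1 -> P * P = 1.
Proof.
move=> h dP.
have h1 := h (delta_mx 0 1); have h2 := h (delta_mx 1 0).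
move/matrixP: h1 => h1; move/matrixP: h2 => h2.
have e1 := h1 0 1; have e2 := h1 1 1; have e3 := h2 1 0; have e4 := h2 0 0.
rewrite !mul2E' !mxE /= in e1 e2 e3 e4.
rewrite det2E in dP.
apply/matrixP; do 2 (let k := fresh "k" in move=> k; case: (ord2 k) => ->);
  rewrite ?(mul2E', mxE) /=.
all: move: e1 e2 e3 e4 dP; rewrite ?(mulr0, mulr1, addr0, add0r, mul0r, mul1r) => e1 e2 e3 e4 dP.
all: rewrite ?e2 ?e4 ?e3 in dP *; rewrite -?dP; ring.
Qed.


Lemma inv_self R : R * R = 1 -> \det R = 1 -> invs 1 R.
Proof.
move=> h dR; have uR := unit1 dR.
by rewrite /invs mul1r mulr1 -[R^-1]mulr1 -h mulKr.
Qed.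

Lemma cross P P' Q Q' : \det P = 1 -> \det P' = 1 -> \det Q = 1 -> \det Q' = 1 ->
  P * P' = P' * P -> Q * Q' = Q' * Q -> P * Q != Q * P ->
  exists2 Y, Y != 0 & [/\ invs Y P, invs Y P', invs Y Q & invs Y Q'].
Proof.
move=> dP dP' dQ dQ' h1 h2 h3; exists (P * Q - Q * P); first by rewrite subr_eq0.
split; apply: comm_inv => //; first [by left | by right].
Qed.

Lemma all_inv (Rs : seq 'M[F]_2) :
  (forall P Q, P \in Rs -> Q \in Rs -> P * Q = Q * P) ->
  (forall R, R \in Rs -> \det R = 1) ->
  exists2 Y, Y != 0 & forall R, R \in Rs -> invs Y R.
Proof.
move=> hc hd.
case: (classic (exists P E, P \in Rs /\ P * E != E * P)).
  move=> [P [E [hP hPE]]]; exists (P * E - E * P); first by rewrite subr_eq0.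
  move=> R hR; apply: comm_inv; first exact: hd.
  by left; apply: hc.
move=> hn; exists 1; first exact: oner_neq0.
move=> R hR; apply: inv_self; last exact: hd.
apply: central; last exact: hd.
move=> E; apply/eqP; apply/negPn/negP => hE; apply: hn; by exists R, E.
Qed.

Lemma case2 A B C D : \det A = 1 -> \det B = 1 -> \det C = 1 -> \det D = 1 ->
  A * B = B * A -> C * D = D * C ->
  exists2 Y, Y != 0 & [/\ invs Y A, invs Y B, invs Y C & invs Y D].
Proof.
move=> dA dB dC dD hAB hCD.
have [hAC|hAC] := eqVneq (A * C) (C * A); last exact: cross.
have [hAD|hAD] := eqVneq (A * D) (D * A).
  2: by have [Y Y0 [? ? ? ?]] := cross dA dB dD dC hAB (esym hCD) hAD; exists Y.
have [hBC|hBC] := eqVneq (B * C) (C * B).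
  2: by have [Y Y0 [? ? ? ?]] := cross dB dA dC dD (esym hAB) hCD hBC; exists Y.
have [hBD|hBD] := eqVneq (B * D) (D * B).
  2: by have [Y Y0 [? ? ? ?]] := cross dB dA dD dC (esym hAB) (esym hCD) hBD; exists Y.
have hc : forall P Q, P \in [:: A; B; C; D] -> Q \in [:: A; B; C; D] -> P * Q = Q * P.
  move=> P Q; rewrite !inE => /or4P[] /eqP -> /or4P[] /eqP -> //.
have hd : forall R, R \in [:: A; B; C; D] -> \det R = 1.
  by move=> R; rewrite !inE => /or4P[] /eqP ->.
have [Y Y0 hY] := all_inv hc hd.
by exists Y => //; split; apply: hY; rewrite !inE eqxx ?orbT.
Qed.

End Gen2.


Section Gen3.
Variable F : fieldType.
Implicit Types A B C D Y Z R P Q E T U : 'M[F]_2.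

Lemma invU P U Y : P \is a GRing.unit -> U \is a GRing.unit -> U * P = P * U ->
  invs Y P -> invs (U^-1 * Y) P.
Proof.
move=> uP uU hc hY; rewrite /invs -mulrA hY mulrA mulrA; congr (_ * _).
have h1 : GRing.comm U P^-1 by apply: GRing.commrV.
have h2 : GRing.comm P^-1 U^-1 by apply: GRing.commrV; apply: GRing.commr_sym.
by rewrite h2.
Qed.

Definition goodT A B C D T :=
  let X := A^-1 * B^-1 * D * C in
  [/\ T * A = A^-1 * T, T * B = B^-1 * T,
      (X^-1 * T) * C = C^-1 * (X^-1 * T) & (X^-1 * T) * D = D^-1 * (X^-1 * T)].

Lemma good_ex A B C D : \det A = 1 -> \det B = 1 -> \det C = 1 -> \det D = 1 ->
  A * B * A^-1 * B^-1 = C * D * C^-1 * D^-1 ->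
  exists2 T, T != 0 & goodT A B C D T.
Proof.
move=> dA dB dC dD hrel.
have uA := unit1 dA; have uB := unit1 dB; have uC := unit1 dC; have uD := unit1 dD.
have uX : A^-1 * B^-1 * D * C \is a GRing.unit.
  by rewrite !unitrMl // unitrV.
have [hAB|hAB] := eqVneq (A * B) (B * A).
  have hCD : C * D = D * C.
    have h1 : C * D * C^-1 * D^-1 = 1 by rewrite -hrel hAB (mulrK uA) (mulrV uB).
    by rewrite -[RHS]mul1r -h1 mulrA (mulrVK uD) (mulrVK uC).
  have [Y Y0 [hYA hYB hYC hYD]] := case2 dA dB dC dD hAB hCD.
  have uAB : A * B \is a GRing.unit by rewrite unitrMl.
  have uDC : D * C \is a GRing.unit by rewrite unitrMl.
  exists ((A * B)^-1 * Y).
    apply/eqP => h; move/eqP: Y0; apply; by rewrite -[Y](mulVKr uAB) h mulr0.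
  have eX : (A^-1 * B^-1 * D * C)^-1 * ((A * B)^-1 * Y) = (D * C)^-1 * Y.
    apply: (mulrI uX); rewrite (mulVKr uX).
    rewrite -(mulrA (A^-1 * B^-1) D C) -[RHS]mulrA (mulVKr uDC) hAB invrM //.
  rewrite /goodT eX; split.
  - by apply: invU => //; rewrite -mulrA -hAB.
  - by apply: invU => //; rewrite hAB -mulrA -hAB.
  - by apply: invU => //; rewrite mulrA hCD.
  - by apply: invU => //; rewrite -mulrA hCD.
exists (A * B - B * A); first by rewrite subr_eq0.
have eS := XS dA dB dC dD hrel.
rewrite /goodT; split.
- by apply: comm_inv => //; left.
- by apply: comm_inv => //; right.
- by rewrite eS (mulKr uX); apply: comm_inv => //; left.
- by rewrite eS (mulKr uX); apply: comm_inv => //; right.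
Qed.

End Gen3.


Section Gen4.
Variable F : fieldType.
Implicit Types A B C D Y Z R P Q E T U X : 'M[F]_2.

Lemma kerline T (u y : 'cV[F]_2) : T != 0 -> u != 0 -> T *m u = 0 -> T *m y = 0 ->
  exists l, y = l *: u.
Proof.
move=> T0 u0 hu hy.
have eu i : T i 0 * u 0 0 + T i 1 * u 1 0 = 0.
  by move/matrixP: hu => /(_ i 0); rewrite mul2E mxE.
have ey i : T i 0 * y 0 0 + T i 1 * y 1 0 = 0.
  by move/matrixP: hy => /(_ i 0); rewrite mul2E mxE.
set d := u 0 0 * y 1 0 - u 1 0 * y 0 0.
have d1 i : T i 0 * d = 0.
  have -> : T i 0 * d = (T i 0 * u 0 0 + T i 1 * u 1 0) * y 1 0
                        - (T i 0 * y 0 0 + T i 1 * y 1 0) * u 1 0 by rewrite /d; ring.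
  by rewrite eu ey !mul0r subrr.
have d2 i : T i 1 * d = 0.
  have -> : T i 1 * d = - (T i 0 * u 0 0 + T i 1 * u 1 0) * y 0 0
                        + (T i 0 * y 0 0 + T i 1 * y 1 0) * u 0 0 by rewrite /d; ring.
  by rewrite eu ey !mul0r oppr0 mul0r addr0.
have d0 : d = 0.
  apply: contraNeq T0 => dn; apply/eqP/matrixP => i j; rewrite mxE.
  case: (ord2 j) => ->.
  - by move: (d1 i) => /eqP; rewrite mulf_eq0 (negPf dn) orbF => /eqP.
  - by move: (d2 i) => /eqP; rewrite mulf_eq0 (negPf dn) orbF => /eqP.
have [u00|u00] := eqVneq (u 0 0) 0.
  have u10 : u 1 0 != 0.
    apply: contraNneq u0 => u10; apply/eqP/matrixP => i j; rewrite mxE.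
    by rewrite (ord1 j); case: (ord2 i) => ->.
  exists (y 1 0 / u 1 0); apply/matrixP => i j; rewrite mxE (ord1 j).
  case: (ord2 i) => ->.
  - move: d0; rewrite /d u00 mul0r sub0r => /eqP; rewrite oppr_eq0 mulf_eq0 (negPf u10) /= => /eqP ->.
    by rewrite mulr0.
  - by rewrite (divfK u10).
exists (y 0 0 / u 0 0); apply/matrixP => i j; rewrite mxE (ord1 j).
case: (ord2 i) => ->.
- by rewrite (divfK u00).
- have e : u 0 0 * y 1 0 = u 1 0 * y 0 0 by apply/eqP; rewrite -subr_eq0; apply/eqP; exact: d0.
  by rewrite -[y 1 0](mulKf u00) e; ring.
Qed.

End Gen4.


Section Gen5.
Variable F : fieldType.
Variable M : gen -> 'M[F]_2.
Hypothesis uM : forall g, M g \is a GRing.unit.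

Lemma eval_cons l w : eval M (l :: w) = (if l.2 then (M l.1)^-1 else M l.1) * eval M w.
Proof. by []. Qed.
Lemma eval_nil : eval M [::] = 1.
Proof. by []. Qed.
Lemma eval_cat w1 w2 : eval M (w1 ++ w2) = eval M w1 * eval M w2.
Proof.
elim: w1 => [|l w1 IH]; first by rewrite eval_nil mul1r.
by rewrite cat_cons !eval_cons IH mulrA.
Qed.
Lemma letter_unit (l : gen * bool) : (if l.2 then (M l.1)^-1 else M l.1) \is a GRing.unit.
Proof. by case: l.2; rewrite ?unitrV uM. Qed.
Lemma eval_unit w : eval M w \is a GRing.unit.
Proof.
elim: w => [|l w IH]; first by rewrite eval_nil unitr1.
by rewrite eval_cons unitrMl // letter_unit.
Qed.
Lemma eval_winv w : eval M (winv w) = (eval M w)^-1.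
Proof.
elim: w => [|l w IH]; first by rewrite (_ : winv [::] = [::]) // eval_nil invr1.
have -> : winv (l :: w) = winv w ++ [:: (l.1, ~~ l.2)].
  by rewrite /winv map_cons rev_cons -cats1.
rewrite eval_cat IH eval_cons eval_nil mulr1 eval_cons invrM ?letter_unit ?eval_unit //.
by congr (_ * _); case: l.2 => /=; rewrite ?invrK.
Qed.

Lemma conj_all T : T \is a GRing.unit ->
  (forall g, T * M g * T^-1 = eval M (tau_gen g)) ->
  forall w, T * eval M w * T^-1 = eval M (tau w).
Proof.
move=> uT hg; elim=> [|l w IH]; first by rewrite eval_nil mulr1 mulrV.
have -> : tau (l :: w) = tau_letter l ++ tau w by [].
have hl : T * (if l.2 then (M l.1)^-1 else M l.1) * T^-1 = eval M (tau_letter l).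
  rewrite /tau_letter; case: l.2; last exact: hg.
  by rewrite eval_winv -hg !invrM ?unitrV ?uM ?unitrMl // invrK !mulrA.
by rewrite eval_cat -IH -hl eval_cons !mulrA (mulrVK uT).
Qed.

End Gen5.


Section Gen6.
Variable F : fieldType.
Implicit Types A B C D Y Z R P Q E T U X : 'M[F]_2.

Lemma conj_gen T X C : X \is a GRing.unit ->
  X^-1 * T * C = C^-1 * (X^-1 * T) -> T * C = X * (C^-1 * X^-1) * T.
Proof. by move=> uX h; rewrite -!mulrA -h -mulrA (mulVKr uX). Qed.

Lemma mcommZ (a b : F) A B : a != 0 -> b != 0 -> A \is a GRing.unit -> B \is a GRing.unit ->
  mcomm (a *: A) (b *: B) = mcomm A B.
Proof.
move=> a0 b0 uA uB; rewrite /mcomm !invmxZ; last first.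
- by rewrite unitmxZ ?unitfE.
- by rewrite unitmxZ ?unitfE.
rewrite -!scalemxAl -!scalemxAr -!scalemxAl !scalerA.
rewrite (_ : a * (b^-1 / a * b) = 1) ?scale1r //.
by field; rewrite a0 b0.
Qed.

Lemma scAr (L : 'M[F]_2) (a : F) (u : 'cV[F]_2) : L *m (a *: u) = a *: (L *m u).
Proof. by rewrite scalemxAr. Qed.

Lemma eigen (M : gen -> 'M[F]_2) T : (forall g, M g \is a GRing.unit) ->
  T != 0 -> T \isn't a GRing.unit -> (forall g, exists Z, T * M g = Z * T) ->
  exists u : 'cV[F]_2, u != 0 /\ forall w, exists lam, eval M w *m u = lam *: u.
Proof.
move=> uM T0 nT hZ.
have dT : \det T^T == 0.
  by rewrite det_tr; move: nT; rewrite unitmxE unitfE negbK.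
have [v v0 hv] := det0P dT.
have Tu : T *m v^T = 0.
  by apply: trmx_inj; rewrite trmx_mul trmxK hv trmx0.
have u0 : v^T != 0.
  by apply/eqP => h; move/eqP: v0; apply; rewrite -(trmxK v) h trmx0.
exists v^T; split => //.
have hg g : exists mu, M g *m v^T = mu *: v^T.
  have [Z hz] := hZ g; apply: (kerline T0 u0 Tu).
  have hz' : T *m M g = Z *m T := hz.
  by rewrite mulmxA hz' -mulmxA Tu mulmx0.
elim=> [|l w [lam IH]].
  by exists 1; rewrite scale1r -[eval M [::]]/(1%:M) mul1mx.
have [mu hmu] := hg l.1.
rewrite eval_cons -[_ * eval M w]/(_ *m eval M w) -mulmxA IH.
case: l.2.
- have mu0 : mu != 0.
    apply/eqP => h; move/eqP: u0; apply.
    have e : v^T = ((M l.1)^-1 * M l.1) *m v^T by rewrite mulVr ?uM // mul1mx.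
    by rewrite e -mulmxA hmu h scale0r mulmx0.
  exists (lam * mu^-1); rewrite scAr -scalerA; congr (_ *: _).
  apply: (@scalerI _ _ mu) => //.
  rewrite -scAr -hmu scalerA mulfV // scale1r mulmxA.
  have -> : (M l.1)^-1 *m M l.1 = 1 by exact: (mulVr (uM l.1)).
  by rewrite mul1mx.
- by exists (lam * mu); rewrite scAr hmu scalerA.
Qed.

End Gen6.



Unset Implicit Arguments. Set Strict Implicit. Set Printing Implicit Defensive.

Theorem theorem5p4 (F : finFieldType) (M : gen -> 'M[F]_2) :
  odd #|F| ->
  (forall g, \det (M g) = 1) ->
  proj_eq (mcomm (M ga) (M gb)) (mcomm (M gc) (M gd)) ->
  irreducible_hom M ->
  (exists N : gen -> 'M[F]_2,
      (forall g, \det (N g) = 1) /\ (forall g, proj_eq (N g) (M g)) /\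
      mcomm (N ga) (N gb) = mcomm (N gc) (N gd)) ->
  exists T : 'M[F]_2, T \in unitmx /\
    forall w : word, proj_eq (T *m eval M w *m invmx T) (eval M (tau w)).
Proof.
move=> _ hdet _ hirr [N [hNdet [hNM hNrel]]].
have uM g : M g \is a GRing.unit := unit1 (hdet g).
have hMN g : mcomm (M g) = fun B => mcomm (M g) B by [].
have eqc (g g' : gen) : mcomm (N g) (N g') = mcomm (M g) (M g').
  have [c [c0 ->]] := hNM g; have [c' [c'0 ->]] := hNM g'.
  exact: mcommZ.
have hrel : M ga * M gb * (M ga)^-1 * (M gb)^-1 = M gc * M gd * (M gc)^-1 * (M gd)^-1.
  by have := hNrel; rewrite !eqc.
have [T T0 [hA hB hC hD]] := good_ex (hdet ga) (hdet gb) (hdet gc) (hdet gd) hrel.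
set X := (M ga)^-1 * (M gb)^-1 * M gd * M gc in hC hD.
have uX : X \is a GRing.unit by rewrite /X !unitrMl ?uM // unitrV.
have eC := conj_gen uX hC; have eD := conj_gen uX hD.
have uT : T \is a GRing.unit.
  apply/negPn/negP => nT.
  have hZ g : exists Z, T * M g = Z * T.
    case: g; [exists (M ga)^-1 | exists (M gb)^-1 | exists (X * ((M gc)^-1 * X^-1))
             | exists (X * ((M gd)^-1 * X^-1))] => //.
  have [u [u0 hu]] := eigen uM T0 nT hZ.
  have [L [iota _]] := countable_algebraic_closure F.
  apply: (hirr L iota); exists (map_mx iota u); split; first by rewrite map_mx_eq0.
  move=> w; have [lam hl] := hu w; exists (iota lam).
  by rewrite -map_mxM hl map_mxZ.
exists T; split; first exact: uT.
move=> w; exists 1; split; first exact: oner_neq0.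
rewrite scale1r; apply: (conj_all uM uT) => g.
have eX : eval M xw = X by rewrite /xw !eval_cons eval_nil /= mulr1 /X !mulrA.
case: g.
- by rewrite [tau_gen _]/= eval_cons eval_nil mulr1 hA (mulrK uT).
- by rewrite [tau_gen _]/= eval_cons eval_nil mulr1 hB (mulrK uT).
- rewrite (_ : tau_gen gc = xw ++ [:: (gc, true)] ++ winv xw) //.
  by rewrite !eval_cat eval_winv // eX eval_cons eval_nil mulr1 eC (mulrK uT) mulrA.
- rewrite (_ : tau_gen gd = xw ++ [:: (gd, true)] ++ winv xw) //.
  by rewrite !eval_cat eval_winv // eX eval_cons eval_nil mulr1 eD (mulrK uT) mulrA.
Qed.
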